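(* Let $A$ be a latin square of order $n$ on symbols $\{0,\dots,n-1\}$ with $k$ pairwise disjoint transversals $T_0,\dots,T_{k-1}$, and let $C$ be a latin square of order $k$ on the symbol set $\{n,\dots,n+k-1\}$ with rows and columns indexed by $\{n,\dots,n+k-1\}$. Define $\widehat{A}_k\subseteq\{0,\dots,n+k-1\}^3$ as follows: every $(a,b,c)\in A\setminus\bigcup_{i=0}^{k-1}T_i$ belongs to $\widehat{A}_k$; for each $i$ and each $(a,b,c)\in T_i$, the triples $(a,b,n+i)$, $(a,n+i,c)$, $(n+i,b,c)$ belong to $\widehat{A}_k$; and every entry $(r,s,u)$ of $C$ belongs to $\widehat{A}_k$. Then $\widehat{A}_k$ is a latin square of order $n+k$ and $$t(\widehat{A}_k)\ \ge\ t(C)\cdot t(A;T_0,\dots,T_{k-1}).$$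
   Context: A latin square of order $m$ on a symbol set $Y$ with $|Y|=m$ is identified with a set of ordered triples $(r,c,s)$ meaning symbol $s$ is in row $r$, column $c$, such that each row and each column contains each symbol exactly once. A transversal is a set of $m$ entries containing exactly one entry from each row and each column, with no symbol repeated. $t(B)$ denotes the number of transversals of a latin square $B$, and $t(A;T_0,\dots,T_{k-1})$ denotes the number of transversals of $A$ that are disjoint from each of $T_0,\dots,T_{k-1}$. *)

(* Defs.v *)
From mathcomp Require Import all_boot.
Set Implicit Arguments. Unset Strict Implicit. Unset Printing Implicit Defensive.

Definition triple (N : nat) := ('I_N * 'I_N * 'I_N)%type.

Definition trow N (x : triple N) : 'I_N := x.1.1.
Definition tcol N (x : triple N) : 'I_N := x.1.2.
Definition tsym N (x : triple N) : 'I_N := x.2.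

Definition latin_on N (Y : {set 'I_N}) (L : {set triple N}) : Prop :=
  [/\ (forall x, x \in L -> [/\ trow x \in Y, tcol x \in Y & tsym x \in Y]),
      (forall r c, r \in Y -> c \in Y -> exists! s, ((r, c), s) \in L),
      (forall r s, r \in Y -> s \in Y -> exists! c, ((r, c), s) \in L) &
      (forall c s, c \in Y -> s \in Y -> exists! r, ((r, c), s) \in L)].

Definition latin_transversal N (Y : {set 'I_N}) (L : {set triple N}) (S : {set triple N}) : bool :=
  [&& S \subset L, #|S| == #|Y| &
      [forall x in S, forall y in S, (x != y) ==>
         [&& trow x != trow y, tcol x != tcol y & tsym x != tsym y]]].

Definition num_transversals N (Y : {set 'I_N}) (L : {set triple N}) : nat :=
  #|[set S : {set triple N} | latin_transversal Y L S]|.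

Definition num_transversals_avoiding N k (Y : {set 'I_N}) (L : {set triple N})
    (T : 'I_k -> {set triple N}) : nat :=
  #|[set S : {set triple N} | latin_transversal Y L S && [forall i, [disjoint S & T i]]]|.

Definition lowY n k : {set 'I_(n + k)} := [set i : 'I_(n + k) | i < n].
Definition highY n k : {set 'I_(n + k)} := [set i : 'I_(n + k) | n <= i].

Definition shiftk n k (i : 'I_k) : 'I_(n + k) := rshift n i.

Definition Ahat n k (A : {set triple (n + k)}) (T : 'I_k -> {set triple (n + k)})
    (C : {set triple (n + k)}) : {set triple (n + k)} :=
  [set x : triple (n + k) |
     [|| (x \in A) && [forall i, x \notin T i],
         [exists i : 'I_k, exists y in T i,
            [|| x == ((trow y, tcol y), shiftk n i),
                x == ((trow y, shiftk n i), tsym y) |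
                x == ((shiftk n i, tcol y), tsym y)]] |
         x \in C]].

(* Main.v *)
Require Import Defs.
From mathcomp Require Import all_boot zify.
Set Implicit Arguments. Unset Strict Implicit. Unset Printing Implicit Defensive.

Inductive or5 (P1 P2 P3 P4 P5 : Prop) : Prop :=
  Or51 of P1 | Or52 of P2 | Or53 of P3 | Or54 of P4 | Or55 of P5.

Section S.
Variables n k : nat.
Local Notation N := (n + k).
Local Notation tr := (triple N).

Lemma inAhat (A : {set tr}) T C x : x \in Ahat A T C <->
 or5 (x \in A /\ (forall i, x \notin T i))
     (exists i p q r, ((p,q),r) \in T i /\ x = ((p,q), shiftk n i))
     (exists i p q r, ((p,q),r) \in T i /\ x = ((p, shiftk n i), r))
     (exists i p q r, ((p,q),r) \in T i /\ x = ((shiftk n i, q), r))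
     (x \in C).
Proof.
rewrite inE; split.
- case/or3P.
  + case/andP=> xA /forallP H. by apply: Or51.
  + case/existsP=> i /existsP [[[p q] r]] /andP [yT /or3P [] /eqP ->].
    * by apply: Or52; exists i, p, q, r.
    * by apply: Or53; exists i, p, q, r.
    * by apply: Or54; exists i, p, q, r.
  + by move=> xC; apply: Or55.
- case=> [[xA H] | [i [p [q [r [yT ->]]]]] | [i [p [q [r [yT ->]]]]]
         | [i [p [q [r [yT ->]]]]] | xC].
  + by rewrite xA /=; apply/orP; left; apply/forallP.
  + apply/orP; right; apply/orP; left; apply/existsP; exists i; apply/existsP.
    by exists ((p,q),r); rewrite yT /trow /tcol /tsym /= eqxx.
  + apply/orP; right; apply/orP; left; apply/existsP; exists i; apply/existsP.
    by exists ((p,q),r); rewrite yT /trow /tcol /tsym /= eqxx !orbT.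
  + apply/orP; right; apply/orP; left; apply/existsP; exists i; apply/existsP.
    by exists ((p,q),r); rewrite yT /trow /tcol /tsym /= eqxx !orbT.
  + by rewrite xC !orbT.
Qed.

Lemma shiftk_ge (i : 'I_k) : n <= shiftk n i.
Proof. by rewrite /shiftk /= leq_addr. Qed.

Lemma shiftk_inj : injective (@shiftk n k).
Proof. exact: rshift_inj. Qed.

Lemma shiftk_onto (c : 'I_N) : n <= c -> exists i, c = shiftk n i.
Proof.
move=> hc; have hi : c - n < k by have := ltn_ord c; lia.
exists (Ordinal hi); apply: val_inj => /=; lia.
Qed.

Lemma transv_sub Y (L S : {set tr}) : latin_transversal Y L S -> S \subset L.
Proof. by case/and3P. Qed.

Lemma transv_card Y (L S : {set tr}) : latin_transversal Y L S -> #|S| = #|Y|.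
Proof. by case/and3P => _ /eqP. Qed.

Lemma transv_dist Y (L S : {set tr}) x y : latin_transversal Y L S ->
  x \in S -> y \in S -> x != y ->
  [/\ trow x != trow y, tcol x != tcol y & tsym x != tsym y].
Proof.
case/and3P => _ _ /forall_inP H xS yS ne.
by have /forall_inP /(_ y yS) /implyP /(_ ne) /and3P := H x xS.
Qed.

Lemma transv_onto Y (L S : {set tr}) (f : tr -> 'I_N) :
  latin_transversal Y L S -> (forall x, x \in L -> f x \in Y) ->
  (forall x y, x \in S -> y \in S -> f x = f y -> x = y) ->
  forall r, r \in Y -> exists2 y, y \in S & f y = r.
Proof.
move=> hS hY hinj r rY.
have E : f @: S = Y.
  apply/eqP; rewrite eqEcard; apply/andP; split.
    apply/subsetP => _ /imsetP [x xS ->]; apply: hY.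
    by apply: (subsetP (transv_sub hS)).
  by rewrite card_in_imset ?(transv_card hS) //; move=> x y xS yS; apply: hinj.
by move: rY; rewrite -E => /imsetP [y yS ->]; exists y.
Qed.

Lemma transv_row Y (L S : {set tr}) x y : latin_transversal Y L S ->
  x \in S -> y \in S -> trow x = trow y -> x = y.
Proof.
move=> h xS yS e; apply/eqP; apply: contraT => ne.
by have [] := transv_dist h xS yS ne; rewrite e eqxx.
Qed.
Lemma transv_col Y (L S : {set tr}) x y : latin_transversal Y L S ->
  x \in S -> y \in S -> tcol x = tcol y -> x = y.
Proof.
move=> h xS yS e; apply/eqP; apply: contraT => ne.
by have [] := transv_dist h xS yS ne; rewrite e eqxx.
Qed.
Lemma transv_sym Y (L S : {set tr}) x y : latin_transversal Y L S ->
  x \in S -> y \in S -> tsym x = tsym y -> x = y.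
Proof.
move=> h xS yS e; apply/eqP; apply: contraT => ne.
by have [] := transv_dist h xS yS ne; rewrite e eqxx.
Qed.


Lemma cell (A : {set tr}) T C (hA : latin_on (lowY n k) A)
  (hT : forall i, latin_transversal (lowY n k) A (T i))
  (hTdisj : forall i j, i != j -> [disjoint T i & T j])
  (hC : latin_on (highY n k) C) (r c : 'I_N) :
  exists! s, ((r,c),s) \in Ahat A T C.
Proof.
case: hA => hA1 hA2 hA3 hA4; case: hC => hC1 hC2 hC3 hC4.
have Alt x : x \in A -> [/\ trow x < n, tcol x < n & tsym x < n].
  by move/hA1; rewrite !inE.
have Cge x : x \in C -> [/\ n <= trow x, n <= tcol x & n <= tsym x].
  by move/hC1; rewrite !inE.
have TA i x : x \in T i -> x \in A.
  by move=> xT; apply: (subsetP (transv_sub (hT i))).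
have disjE i j x : x \in T i -> x \in T j -> i = j.
  move=> xi xj; apply/eqP; apply: contraT => ne.
  have := hTdisj _ _ ne; rewrite disjoint_subset => /subsetP /(_ x xi).
  by rewrite inE xj.
have ns (i : 'I_k) : n <= shiftk n i by apply: shiftk_ge.
case: (ltnP r n) => hr; case: (ltnP c n) => hc.
- have hrY : r \in lowY n k by rewrite inE.
  have hcY : c \in lowY n k by rewrite inE.
  have [s0 [s0A s0u]] := hA2 r c hrY hcY.
  case: (pickP (fun i => ((r,c),s0) \in T i)) => [i0 Hi0 | Hno].
  + exists (shiftk n i0); split.
      by apply/inAhat; apply: Or52; exists i0, r, c, s0.
    move=> s /inAhat [[xA H] | [i [p [q [u [yT e]]]]] | [i [p [q [u [yT e]]]]]
         | [i [p [q [u [yT e]]]]] | xC].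
    * by move: (H i0); rewrite -(s0u s xA) Hi0.
    * case: e => e1 e2 e3; subst p q s.
      have := s0u u (TA _ _ yT) => E; subst u.
      by rewrite (disjE _ _ _ yT Hi0).
    * case: e => e1 e2 e3; subst; have := ns i; lia.
    * case: e => e1 e2 e3; subst; have := ns i; lia.
    * have [] := Cge _ xC; rewrite /trow /=; lia.
  + exists s0; split.
      by apply/inAhat; apply: Or51; split => // i; rewrite Hno.
    move=> s /inAhat [[xA H] | [i [p [q [u [yT e]]]]] | [i [p [q [u [yT e]]]]]
         | [i [p [q [u [yT e]]]]] | xC].
    * exact: s0u.
    * case: e => e1 e2 e3; subst p q s.
      have := s0u u (TA _ _ yT) => E; subst u.
      by rewrite Hno in yT.
    * case: e => e1 e2 e3; subst; have := ns i; lia.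
    * case: e => e1 e2 e3; subst; have := ns i; lia.
    * have [] := Cge _ xC; rewrite /trow /=; lia.
- have [i0 E] := shiftk_onto hc; subst c.
  have hrY : r \in lowY n k by rewrite inE.
  have [[[p0 q0] s0] yT yr] := transv_onto (hT i0)
     (fun x xA => let: And3 h _ _ := hA1 x xA in h)
     (fun x y => transv_row (hT i0)) hrY.
  rewrite /trow /= in yr; subst p0.
  exists s0; split.
    by apply/inAhat; apply: Or53; exists i0, r, q0, s0.
  move=> s /inAhat [[xA H] | [i [p [q [u [yT' e]]]]] | [i [p [q [u [yT' e]]]]]
         | [i [p [q [u [yT' e]]]]] | xC].
  * have [] := Alt _ xA; rewrite /tcol /=; have := ns i0; lia.
  * case: e => e1 e2 e3; subst p q.
    have [] := Alt _ (TA _ _ yT'); rewrite /tcol /=; have := ns i0; lia.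
  * case: e => e1 e2 e3; have {e2} e2 : i0 = i by apply: val_inj => /=; lia.
    subst p i u.
    have := transv_row (hT i0) yT yT' erefl.
    by case.
  * case: e => e1 e2 e3; subst; have := ns i; lia.
  * have [] := Cge _ xC; rewrite /trow /=; lia.
- have [i0 E] := shiftk_onto hr; subst r.
  have hcY : c \in lowY n k by rewrite inE.
  have [[[p0 q0] s0] yT yr] := transv_onto (hT i0)
     (fun x xA => let: And3 _ h _ := hA1 x xA in h)
     (fun x y => transv_col (hT i0)) hcY.
  rewrite /tcol /= in yr; subst q0.
  exists s0; split.
    by apply/inAhat; apply: Or54; exists i0, p0, c, s0.
  move=> s /inAhat [[xA H] | [i [p [q [u [yT' e]]]]] | [i [p [q [u [yT' e]]]]]
         | [i [p [q [u [yT' e]]]]] | xC].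
  * have [] := Alt _ xA; rewrite /trow /=; have := ns i0; lia.
  * case: e => e1 e2 e3; subst p q.
    have [] := Alt _ (TA _ _ yT'); rewrite /trow /=; have := ns i0; lia.
  * case: e => e1 e2 e3; subst; have := ns i; lia.
  * case: e => e1 e2 e3; have {e1} e1 : i0 = i by apply: val_inj => /=; lia.
    subst q i u.
    have := transv_col (hT i0) yT yT' erefl.
    by case.
  * have [] := Cge _ xC; rewrite /tcol /=; lia.
- have hrY : r \in highY n k by rewrite inE.
  have hcY : c \in highY n k by rewrite inE.
  have [s0 [s0C s0u]] := hC2 r c hrY hcY.
  exists s0; split.
    by apply/inAhat; apply: Or55.
  move=> s /inAhat [[xA H] | [i [p [q [u [yT e]]]]] | [i [p [q [u [yT e]]]]]
         | [i [p [q [u [yT e]]]]] | xC].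
  * have [] := Alt _ xA; rewrite /trow /=; lia.
  * case: e => e1 e2 e3; subst p q.
    have [] := Alt _ (TA _ _ yT); rewrite /trow /=; lia.
  * case: e => e1 e2 e3; subst p.
    have [] := Alt _ (TA _ _ yT); rewrite /trow /=; lia.
  * case: e => e1 e2 e3; subst q.
    have [] := Alt _ (TA _ _ yT); rewrite /tcol /=; lia.
  * exact: s0u.
Qed.

Definition swp (x : tr) : tr := ((x.1.1, x.2), x.1.2).
Definition rot (x : tr) : tr := ((x.2, x.1.1), x.1.2).
Definition rotinv (x : tr) : tr := ((x.1.2, x.2), x.1.1).
Arguments swp x /.
Arguments rot x /.
Arguments rotinv x /.

Lemma swp_inj : injective swp.
Proof. by apply: (can_inj (g := swp)) => [[[a b] d]]. Qed.
Lemma rot_inj : injective rot.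
Proof. by apply: (can_inj (g := rotinv)) => [[[a b] d]]. Qed.

Lemma ex_uniq_ext (X : Type) (P Q : X -> Prop) :
  (forall x, P x <-> Q x) -> (exists! x, P x) -> exists! x, Q x.
Proof.
move=> PQ [x [Px u]]; exists x; split; first by apply/PQ.
by move=> y /PQ; apply: u.
Qed.

Lemma latin_swp Y (L : {set tr}) : latin_on Y L -> latin_on Y (swp @^-1: L).
Proof.
case=> h1 h2 h3 h4; split.
- move=> [[a b] d]; rewrite inE /= => /h1 [].
  by rewrite /trow /tcol /tsym /= => *; split.
- move=> r c rY cY; apply: ex_uniq_ext (h3 r c rY cY) => x; by rewrite inE.
- move=> r s rY sY; apply: ex_uniq_ext (h2 r s rY sY) => x; by rewrite inE.
- move=> c s cY sY; apply: ex_uniq_ext (h4 s c sY cY) => x; by rewrite inE.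
Qed.

Lemma latin_rot Y (L : {set tr}) : latin_on Y L -> latin_on Y (rot @^-1: L).
Proof.
case=> h1 h2 h3 h4; split.
- move=> [[a b] d]; rewrite inE /= => /h1 [].
  by rewrite /trow /tcol /tsym /= => *; split.
- move=> r c rY cY; apply: ex_uniq_ext (h4 r c rY cY) => x; by rewrite inE.
- move=> r s rY sY; apply: ex_uniq_ext (h2 s r sY rY) => x; by rewrite inE.
- move=> c s cY sY; apply: ex_uniq_ext (h3 s c sY cY) => x; by rewrite inE.
Qed.

Lemma transv_pre (f : tr -> tr) Y (L S : {set tr}) : injective f ->
  (forall x y, [&& trow (f x) != trow (f y), tcol (f x) != tcol (f y) & tsym (f x) != tsym (f y)] ->
               [&& trow x != trow y, tcol x != tcol y & tsym x != tsym y]) ->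
  latin_transversal Y L S -> latin_transversal Y (f @^-1: L) (f @^-1: S).
Proof.
move=> fi hD /and3P [sub cardS /forall_inP H]; apply/and3P; split.
- exact: preimsetS sub.
- by rewrite card_preimset.
- apply/forall_inP => x; rewrite inE => xS; apply/forall_inP => y; rewrite inE => yS.
  apply/implyP => ne; apply: hD.
  have /forall_inP /(_ _ yS) /implyP := H _ xS; apply.
  by rewrite (inj_eq fi).
Qed.

Lemma transv_swp Y (L S : {set tr}) :
  latin_transversal Y L S -> latin_transversal Y (swp @^-1: L) (swp @^-1: S).
Proof.
apply: transv_pre; first exact: swp_inj.
move=> [[a b] d] [[a' b'] d']; rewrite /trow /tcol /tsym /=.
by case/and3P => -> -> ->.
Qed.

Lemma transv_rot Y (L S : {set tr}) :
  latin_transversal Y L S -> latin_transversal Y (rot @^-1: L) (rot @^-1: S).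
Proof.
apply: transv_pre; first exact: rot_inj.
move=> [[a b] d] [[a' b'] d']; rewrite /trow /tcol /tsym /=.
by case/and3P => -> -> ->.
Qed.

Lemma disj_pre (f : tr -> tr) (A B : {set tr}) :
  [disjoint A & B] -> [disjoint f @^-1: A & f @^-1: B].
Proof.
rewrite -!setI_eq0 -preimsetI => /eqP ->; apply/eqP; apply/setP => x.
by rewrite !inE.
Qed.

Ltac sf yT :=
  first [ solve [apply: Or52; do 4 eexists; split; [|reflexivity]; rewrite ?inE /=; exact: yT]
        | solve [apply: Or53; do 4 eexists; split; [|reflexivity]; rewrite ?inE /=; exact: yT]
        | solve [apply: Or54; do 4 eexists; split; [|reflexivity]; rewrite ?inE /=; exact: yT] ].

Lemma Ahat_pre (f : tr -> tr) (A : {set tr}) (T : 'I_k -> {set tr}) (C : {set tr}) x : (f = swp \/ f = rot) ->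
  (x \in Ahat (f @^-1: A) (fun i => f @^-1: T i) (f @^-1: C) <-> f x \in Ahat A T C).
Proof.
move=> hf; rewrite !inAhat; case: x => [[a b] d]; split.
- case=> [[xA H] | [i [p [q [r [yT e]]]]] | [i [p [q [r [yT e]]]]]
         | [i [p [q [r [yT e]]]]] | xC].
  + apply: Or51; split; first by rewrite inE in xA.
    by move=> i; have := H i; rewrite inE.
  + case: e => ???; subst; rewrite inE in yT; case: hf => hf; subst f; rewrite /= in yT *; sf yT.
  + case: e => ???; subst; rewrite inE in yT; case: hf => hf; subst f; rewrite /= in yT *; sf yT.
  + case: e => ???; subst; rewrite inE in yT; case: hf => hf; subst f; rewrite /= in yT *; sf yT.
  + by apply: Or55; rewrite inE in xC.
- case=> [[xA H] | [i [p [q [r [yT e]]]]] | [i [p [q [r [yT e]]]]]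
         | [i [p [q [r [yT e]]]]] | xC].
  + apply: Or51; split; first by rewrite inE.
    by move=> i; rewrite inE.
  + case: hf => hf; subst f; rewrite /= in e; case: e => ???; subst; sf yT.
  + case: hf => hf; subst f; rewrite /= in e; case: e => ???; subst; sf yT.
  + case: hf => hf; subst f; rewrite /= in e; case: e => ???; subst; sf yT.
  + by apply: Or55; rewrite inE.
Qed.

Lemma Ahat_latin (A : {set tr}) T C (hA : latin_on (lowY n k) A)
  (hT : forall i, latin_transversal (lowY n k) A (T i))
  (hTdisj : forall i j, i != j -> [disjoint T i & T j])
  (hC : latin_on (highY n k) C) : latin_on [set: 'I_N] (Ahat A T C).
Proof.
split.
- by move=> x _; rewrite !inE.
- by move=> r c _ _; apply: cell.
- move=> r s _ _.
  have := cell (latin_swp hA) (fun i => transv_swp (hT i))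
    (fun i j ne => disj_pre swp (hTdisj i j ne)) (latin_swp hC) r s.
  apply: ex_uniq_ext => c; rewrite Ahat_pre; last by left.
  by [].
- move=> c s _ _.
  have := cell (latin_rot hA) (fun i => transv_rot (hT i))
    (fun i j ne => disj_pre rot (hTdisj i j ne)) (latin_rot hC) c s.
  apply: ex_uniq_ext => r; rewrite Ahat_pre; last by right.
  by [].
Qed.

Lemma Ahat_count (A : {set tr}) (T : 'I_k -> {set tr}) (C : {set tr})
  (hA : latin_on (lowY n k) A) (hC : latin_on (highY n k) C) :
  num_transversals [set: 'I_N] (Ahat A T C) >=
    num_transversals (highY n k) C * num_transversals_avoiding (lowY n k) A T.
Proof.
case: hA => hA1 _ _ _; case: hC => hC1 _ _ _.
have Alt x : x \in A -> [/\ trow x < n, tcol x < n & tsym x < n].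
  by move/hA1; rewrite !inE.
have Cge x : x \in C -> [/\ n <= trow x, n <= tcol x & n <= tsym x].
  by move/hC1; rewrite !inE.
set TC := [set S | latin_transversal (highY n k) C S].
set TA := [set S | latin_transversal (lowY n k) A S && [forall i, [disjoint S & T i]]].
rewrite /num_transversals /num_transversals_avoiding -/TC -/TA -cardsX.
have split1 (S1 S2 : {set tr}) : S1 \subset C -> S2 \subset A ->
    S1 = [set x in S1 :|: S2 | n <= trow x] /\ S2 = [set x in S1 :|: S2 | trow x < n].
  move=> /subsetP s1 /subsetP s2; split; apply/setP => x; rewrite !inE.
  - case xS1: (x \in S1) => /=; first by have [] := Cge _ (s1 _ xS1).
    by case xS2: (x \in S2) => //=; have [] := Alt _ (s2 _ xS2) => h _ _; apply/esym/negbTE; rewrite -ltnNge.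
  - case xS2: (x \in S2) => /=; first by have [] := Alt _ (s2 _ xS2); rewrite orbT.
    by case xS1: (x \in S1) => //=; have [] := Cge _ (s1 _ xS1) => h _ _; apply/esym/negbTE; rewrite -leqNgt.
rewrite -(card_in_imset (f := fun P => P.1 :|: P.2)); last first.
  move=> [S1 S2] [S1' S2'] /setXP [h1 h2] /setXP [h1' h2'] /= E.
  rewrite !inE in h1 h2 h1' h2'.
  case/andP: h2 => h2 _; case/andP: h2' => h2' _.
  have [e1 e2] := split1 _ _ (transv_sub h1) (transv_sub h2).
  have [e1' e2'] := split1 _ _ (transv_sub h1') (transv_sub h2').
  by congr pair; [rewrite e1 e1' E | rewrite e2 e2' E].
apply: subset_leq_card; apply/subsetP => _ /imsetP [[S1 S2] /setXP [h1 h2] ->].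
rewrite !inE in h1 h2 *; case/andP: h2 => h2 /forallP hdis.
have s1 := subsetP (transv_sub h1); have s2 := subsetP (transv_sub h2).
have I0 : S1 :&: S2 = set0.
  apply/setP => x; rewrite !inE; apply/negP => /andP [x1 x2].
  have [] := Cge _ (s1 _ x1); have [] := Alt _ (s2 _ x2); lia.
have hY : highY n k = ~: lowY n k.
  by apply/setP => x; rewrite !inE -leqNgt.
apply/and3P; split.
- apply/subsetP => x; rewrite inE => /orP [xS1 | xS2]; apply/inAhat.
    by apply: Or55; apply: s1.
  apply: Or51; split; first exact: s2.
  move=> i; have := hdis i; rewrite disjoint_subset => /subsetP /(_ x xS2).
  by rewrite inE.
- rewrite cardsU I0 cards0 subn0 (transv_card h1) (transv_card h2) hY addnC.
  by rewrite cardsC cardsT.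
- apply/forall_inP => x; rewrite inE => hx; apply/forall_inP => y; rewrite inE => hy.
  apply/implyP => ne.
  case/orP: hx => hx; case/orP: hy => hy.
  + by have [-> -> ->] := transv_dist h1 hx hy ne.
  + have [] := Cge _ (s1 _ hx); have [] := Alt _ (s2 _ hy) => *.
    by apply/and3P; split; apply/eqP => e; have := congr1 (@nat_of_ord _) e; lia.
  + have [] := Alt _ (s2 _ hx); have [] := Cge _ (s1 _ hy) => *.
    by apply/and3P; split; apply/eqP => e; have := congr1 (@nat_of_ord _) e; lia.
  + by have [-> -> ->] := transv_dist h2 hx hy ne.
Qed.
End S.

Theorem mainTheorem4 (n k : nat)
    (A : {set triple (n + k)}) (T : 'I_k -> {set triple (n + k)})
    (C : {set triple (n + k)})
    (hA : latin_on (lowY n k) A)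
    (hT : forall i : 'I_k, latin_transversal (lowY n k) A (T i))
    (hTdisj : forall i j : 'I_k, i != j -> [disjoint T i & T j])
    (hC : latin_on (highY n k) C) :
  latin_on [set: 'I_(n + k)] (Ahat A T C) /\
  num_transversals [set: 'I_(n + k)] (Ahat A T C) >=
    num_transversals (highY n k) C * num_transversals_avoiding (lowY n k) A T.
Proof.
split; first exact: Ahat_latin.
exact: Ahat_count.
Qed.
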